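(* Let $n\ge 0$ be an integer, $\alpha=-\frac{1}{2n+2}$, and for $k\in\mathbb{Z}_+$ let $$v_k(t)=e^{-\frac{t^{2n+2}}{2n+2}}L^{(\alpha)}_{k}\!\left(\frac{t^{2n+2}}{n+1}\right),$$ with the convention $v_\ell\equiv0$ for $\ell<0$. Then $$t\frac{d}{dt}v_k(t)=(n+1)\big((k+1)v_{k+1}(t)-(1+\alpha)v_k(t)-(k+\alpha)v_{k-1}(t)\big),\quad k\ge1,$$ $$t\frac{d}{dt}v_0(t)=(n+1)\big(v_1(t)-(1+\alpha)v_0(t)\big).$$ More generally, for all $i,k\in\mathbb{Z}_+$ there are constants $\delta^{k,i}_j$, $j=-i,\dots,i$, with $$\Big(t\frac{d}{dt}\Big)^{i}v_k(t)=\sum_{j=-i}^{i}\delta^{k,i}_{j}\,v_{k+j}(t)=\sum_{j=\max\{k-i,0\}}^{k+i}\delta^{k,i}_{j-k}v_j(t),$$ where (i) $\delta^{k,i}_i=(n+1)^i\frac{(k+i)!}{k!}$, and (ii) $|\delta^{k,i}_j|\le C^{i}\frac{(k+i)!}{k!}$ for $j=-i,\dots,i$, with $C>0$ a suitable constant independent of $i,j,k$.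
   Context: $L^{(a)}_k(s)=\sum_{i=0}^{k}(-1)^i\binom{k+a}{k-i}\frac{s^i}{i!}$ denotes the generalized Laguerre polynomial of degree $k$ and parameter $a$. *)

(* Defs.v *)
From Stdlib Require Import Reals ZArith Lra.
From Coquelicot Require Import Coquelicot.
Open Scope R_scope.

Fixpoint falling (x : R) (m : nat) : R :=
  match m with
  | O => 1
  | S m' => falling x m' * (x - INR m')
  end.

Definition gbinom (x : R) (m : nat) : R := falling x m / INR (fact m).

Definition laguerre (k : nat) (a s : R) : R :=
  sum_n (fun i => (-1) ^ i * gbinom (INR k + a) (k - i) * s ^ i / INR (fact i)) k.

Definition alpha (n : nat) : R := - / (2 * INR n + 2).

Definition v (n : nat) (l : Z) (t : R) : R :=
  if (l <? 0)%Z then 0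
  else exp (- t ^ (2 * n + 2) / (2 * INR n + 2)) *
       laguerre (Z.to_nat l) (alpha n) (t ^ (2 * n + 2) / (INR n + 1)).

Definition euler (f : R -> R) : R -> R := fun t => t * Derive f t.

Definition euler_iter (i : nat) (f : R -> R) : R -> R := Nat.iter i euler f.

(* Main.v *)
Require Import Defs.
From Stdlib Require Import Reals ZArith Lra Lia.
From Coquelicot Require Import Coquelicot.
Open Scope R_scope.

Definition cc (a : R) (k i : nat) : R :=
  if (i <=? k)%nat then (-1) ^ i * gbinom (INR k + a) (k - i) / INR (fact i) else 0.

Lemma cc_out a k i : (k < i)%nat -> cc a k i = 0.
Proof. intros H; unfold cc. destruct (Nat.leb_spec i k); [lia|reflexivity]. Qed.

Lemma lag_ext a k K s : (k <= K)%nat ->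
  laguerre k a s = sum_f_R0 (fun i => cc a k i * s ^ i) K.
Proof.
  intros H; unfold laguerre; rewrite sum_n_Reals.
  induction H.
  - apply sum_eq; intros i Hi; unfold cc.
    rewrite (proj2 (Nat.leb_le _ _) Hi). unfold Rdiv; ring.
  - simpl. rewrite IHle, cc_out by lia. ring.
Qed.

Lemma falling_head x m : falling (x + 1) (S m) = (x + 1) * falling x m.
Proof.
  induction m.
  - simpl. ring.
  - change (falling (x + 1) (S (S m))) with (falling (x+1) (S m) * (x + 1 - INR (S m))).
    rewrite IHm. simpl falling at 2. rewrite S_INR. ring.
Qed.

Lemma fact_neq k : INR (fact k) <> 0.
Proof. apply INR_fact_neq_0. Qed.

Lemma R1 a k i : cc a (S k) i * (INR k + 1 - INR i) = (INR k + 1 + a) * cc a k i.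
Proof.
  destruct (Nat.le_gt_cases i k) as [H|H].
  - unfold cc. rewrite (proj2 (Nat.leb_le _ _) H).
    assert (H' : (i <= S k)%nat) by lia. rewrite (proj2 (Nat.leb_le _ _) H').
    replace (S k - i)%nat with (S (k - i)) by lia.
    assert (Hm : INR k - INR i = INR (k - i)) by (rewrite minus_INR; lia || reflexivity).
    unfold gbinom. rewrite S_INR.
    replace (INR k + 1 + a) with ((INR k + a) + 1) by ring.
    rewrite falling_head. rewrite fact_simpl, mult_INR, S_INR.
    replace (INR k + 1 - INR i) with (INR (k - i) + 1) by lra.
    field. split; [apply fact_neq|]. split; [apply fact_neq|].
    pose proof (pos_INR (k - i)); lra.
  - destruct (Nat.eq_dec i (S k)) as [->|Hne].
    + rewrite (cc_out a k (S k)) by lia. rewrite S_INR. ring.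
    + rewrite !cc_out by lia. ring.
Qed.

Lemma R2 a k j : cc a k j * (INR k - INR j) = - (INR j + 1 + a) * (INR j + 1) * cc a k (S j).
Proof.
  destruct (Nat.le_gt_cases (S j) k) as [H|H].
  - unfold cc. rewrite (proj2 (Nat.leb_le _ _) H).
    assert (H' : (j <= k)%nat) by lia. rewrite (proj2 (Nat.leb_le _ _) H').
    set (m := (k - S j)%nat).
    replace (k - j)%nat with (S m) by (unfold m; lia).
    assert (Hk : INR k = INR (S j) + INR m) by (rewrite <- plus_INR; f_equal; unfold m; lia).
    unfold gbinom. simpl falling. rewrite !fact_simpl, !mult_INR, !S_INR.
    rewrite !S_INR in Hk. rewrite Hk.
    simpl pow. field. split; [apply fact_neq|]. split; [apply fact_neq|].
    pose proof (pos_INR m); pose proof (pos_INR j); lra.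
  - destruct (Nat.eq_dec j k) as [->|Hne].
    + rewrite (cc_out a k (S k)) by lia. ring.
    + rewrite !cc_out by lia. ring.
Qed.

Definition shc (a : R) (k i : nat) : R := match i with O => 0 | S j => cc a k j end.
Definition ccm (a : R) (k i : nat) : R :=
  match k with O => 0 | S k' => (INR k + a) * cc a k' i end.

Lemma R2' a k i : shc a k i * (INR k + 1 - INR i) = - (INR i + a) * INR i * cc a k i.
Proof.
  destruct i as [|j]; simpl shc.
  - simpl INR. ring.
  - rewrite S_INR. replace (INR k + 1 - (INR j + 1)) with (INR k - INR j) by ring.
    rewrite R2. ring.
Qed.

Lemma R3 a k i : ccm a k i = cc a k i * (INR k - INR i).
Proof.
  destruct k as [|k'].
  - simpl ccm. destruct i as [|i]. + simpl INR. ring. + rewrite cc_out by lia. ring.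
  - change (ccm a (S k') i) with ((INR (S k') + a) * cc a k' i).
    rewrite S_INR. rewrite R1. ring.
Qed.

Lemma cc_diag a k : cc a k k = (-1) ^ k / INR (fact k).
Proof.
  unfold cc. rewrite Nat.leb_refl, Nat.sub_diag. unfold gbinom. simpl.
  field. apply fact_neq.
Qed.

Lemma coef a k i :
  2 * INR i * cc a k i - shc a k i =
  (INR k + 1) * cc a (S k) i - (1 + a) * cc a k i - ccm a k i.
Proof.
  destruct (Nat.eq_dec i (S k)) as [->|Hne].
  - simpl shc. rewrite R3. rewrite (cc_out a k (S k)) by lia.
    rewrite !cc_diag. rewrite fact_simpl, mult_INR, S_INR. simpl pow.
    field. split; [apply fact_neq|]. pose proof (pos_INR k); lra.
  - assert (HD : INR k + 1 - INR i <> 0).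
    { intro HH. apply Hne. apply INR_eq. rewrite S_INR. lra. }
    apply (Rmult_eq_reg_r (INR k + 1 - INR i)); [|exact HD].
    rewrite R3.
    replace ((2 * INR i * cc a k i - shc a k i) * (INR k + 1 - INR i))
      with (2 * INR i * cc a k i * (INR k + 1 - INR i) - shc a k i * (INR k + 1 - INR i)) by ring.
    rewrite R2'.
    replace (((INR k + 1) * cc a (S k) i - (1 + a) * cc a k i - cc a k i * (INR k - INR i)) *
              (INR k + 1 - INR i))
      with ((INR k + 1) * (cc a (S k) i * (INR k + 1 - INR i)) - ((1 + a) * cc a k i + cc a k i * (INR k - INR i)) *
              (INR k + 1 - INR i)) by ring.
    rewrite R1. ring.
Qed.

Lemma sum_S (g : nat -> R) N : sum_f_R0 g (S N) = g O + sum_f_R0 (fun i => g (S i)) N.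
Proof.
  induction N.
  - simpl. ring.
  - change (sum_f_R0 g (S (S N))) with (sum_f_R0 g (S N) + g (S (S N))).
    rewrite IHN. simpl. ring.
Qed.

Lemma sum_minus (f g : nat -> R) N :
  sum_f_R0 (fun i => f i - g i) N = sum_f_R0 f N - sum_f_R0 g N.
Proof. induction N; simpl; [ring| rewrite IHN; ring]. Qed.

Lemma sum_scal (c : R) (f : nat -> R) N :
  sum_f_R0 (fun i => c * f i) N = c * sum_f_R0 f N.
Proof. induction N; simpl; [ring| rewrite IHN; ring]. Qed.

Lemma sum_lin3 (c e : R) (x y z : nat -> R) N :
  sum_f_R0 (fun i => c * (x i - e * y i - z i)) N =
  c * (sum_f_R0 x N - e * sum_f_R0 y N - sum_f_R0 z N).
Proof. induction N; simpl; [ring| rewrite IHN; ring]. Qed.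

Definition lagm (a : R) (k : nat) (s : R) : R :=
  match k with O => 0 | S k' => (INR k + a) * laguerre k' a s end.

Lemma poly_id a k s :
  sum_f_R0 (fun i => cc a k i * (2 * INR i * s ^ i - s ^ (S i))) (S k) =
  (INR k + 1) * laguerre (S k) a s - (1 + a) * laguerre k a s - lagm a k s.
Proof.
  transitivity (sum_f_R0 (fun i => (2 * INR i * cc a k i - shc a k i) * s ^ i) (S (S k))).
  - rewrite (sum_eq (fun i => (2 * INR i * cc a k i - shc a k i) * s ^ i)
      (fun i => 2 * INR i * cc a k i * s ^ i - shc a k i * s ^ i))
      by (intros; ring).
    rewrite sum_minus.
    rewrite (sum_eq (fun i => cc a k i * (2 * INR i * s ^ i - s ^ (S i)))
      (fun i => 2 * INR i * cc a k i * s ^ i - cc a k i * s ^ (S i)))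
      by (intros; ring).
    rewrite sum_minus.
    f_equal.
    + change (sum_f_R0 (fun i => 2 * INR i * cc a k i * s ^ i) (S (S k))) with
        (sum_f_R0 (fun i => 2 * INR i * cc a k i * s ^ i) (S k) +
         2 * INR (S (S k)) * cc a k (S (S k)) * s ^ (S (S k))).
      rewrite (cc_out a k (S (S k))) by lia. ring.
    + rewrite (sum_S (fun i => shc a k i * s ^ i)). simpl shc at 1. rewrite Rmult_0_l, Rplus_0_l.
      reflexivity.
  - rewrite (lag_ext a (S k) (S (S k))) by lia.
    rewrite (lag_ext a k (S (S k))) by lia.
    transitivity (sum_f_R0 (fun i => (INR k + 1) * (cc a (S k) i * s ^ i)
         - (1 + a) * (cc a k i * s ^ i) - ccm a k i * s ^ i) (S (S k))).
    + apply sum_eq; intros i _. rewrite coef. ring.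
    + rewrite !sum_minus, !sum_scal. f_equal.
      destruct k as [|k'].
      * simpl. ring.
      * unfold lagm. rewrite (lag_ext a k' (S (S (S k')))) by lia.
        rewrite <- sum_scal. apply sum_eq; intros i _.
        change (ccm a (S k') i) with ((INR (S k') + a) * cc a k' i). ring.
Qed.

Definition E (n : nat) (t : R) : R := exp (- t ^ (2 * n + 2) / (2 * INR n + 2)).
Definition Sf (n : nat) (t : R) : R := t ^ (2 * n + 2) / (INR n + 1).

Lemma term_der n i t :
  ex_derive (fun t => E n t * Sf n t ^ i) t /\
  t * Derive (fun t => E n t * Sf n t ^ i) t =
  (INR n + 1) * (E n t * (2 * INR i * Sf n t ^ i - Sf n t ^ (S i))).
Proof.
  assert (H : exists l, is_derive (fun t => E n t * Sf n t ^ i) t l /\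
     t * l = (INR n + 1) * (E n t * (2 * INR i * Sf n t ^ i - Sf n t ^ (S i)))).
  { eexists; split.
    - unfold E, Sf. auto_derive; [trivial| reflexivity].
    - unfold E, Sf.
      replace (n + (n + 0) + 2)%nat with (S (2 * n + 1)) by lia.
      replace (2 * n + 2)%nat with (S (2 * n + 1)) by lia.
      rewrite Nat.pred_succ. unfold Rdiv.
      assert (HI : INR (S (2 * n + 1)) = 2 * INR n + 2).
      { rewrite S_INR, plus_INR, mult_INR. simpl. ring. }
      rewrite HI.
      change (t ^ S (2 * n + 1)) with (t * t ^ (2 * n + 1)).
      generalize (t ^ (2 * n + 1)) as T. intro T.
      generalize (exp (- (t * T) * / (2 * INR n + 2))) as X. intro X.
      assert (Hn : INR n + 1 <> 0) by (pose proof (pos_INR n); lra).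
      assert (Hn2 : 2 * INR n + 2 <> 0) by (pose proof (pos_INR n); lra).
      destruct i as [|i].
      + simpl. field. auto.
      + rewrite Nat.pred_succ. change ((t * T * / (INR n + 1)) ^ S (S i)) with
          ((t * T * / (INR n + 1)) * (t * T * / (INR n + 1)) ^ (S i)).
        change ((t * T * / (INR n + 1)) ^ S i) with
          ((t * T * / (INR n + 1)) * (t * T * / (INR n + 1)) ^ i).
        rewrite S_INR. field. auto. }
  destruct H as [l [H1 H2]]. split.
  - exists l; exact H1.
  - assert (HD : Derive (fun t => E n t * Sf n t ^ i) t = l)
      by (apply is_derive_unique; exact H1).
    rewrite HD. exact H2.
Qed.

Lemma is_der_sum (f : nat -> R -> R) (df : nat -> R) t N :
  (forall i, is_derive (f i) t (df i)) ->
  is_derive (fun x => sum_f_R0 (fun i => f i x) N) t (sum_f_R0 df N).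
Proof.
  intros Hf. induction N.
  - simpl. apply Hf.
  - simpl. apply (is_derive_plus (fun x => sum_f_R0 (fun i => f i x) N) (f (S N))); auto.
Qed.

Lemma der_sum (f : nat -> R -> R) t N : (forall i, ex_derive (f i) t) ->
  ex_derive (fun x => sum_f_R0 (fun i => f i x) N) t /\ Derive (fun x => sum_f_R0 (fun i => f i x) N) t = sum_f_R0 (fun i => Derive (f i) t) N.
Proof.
  intros Hf.
  assert (H : is_derive (fun x => sum_f_R0 (fun i => f i x) N) t (sum_f_R0 (fun i => Derive (f i) t) N)).
  { apply is_der_sum. intro i. apply Derive_correct. apply Hf. }
  split.
  - eexists; exact H.
  - apply is_derive_unique. exact H.
Qed.

Lemma v_nat n k t : v n (Z.of_nat k) t = E n t * laguerre k (alpha n) (Sf n t).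
Proof.
  unfold v, E, Sf. rewrite (proj2 (Z.ltb_ge _ _)) by lia. rewrite Nat2Z.id. reflexivity.
Qed.

Lemma v_neg n l t : (l < 0)%Z -> v n l t = 0.
Proof. intros H. unfold v. rewrite (proj2 (Z.ltb_lt _ _) H). reflexivity. Qed.

Lemma core n k t :
  ex_derive (v n (Z.of_nat k)) t /\
  t * Derive (v n (Z.of_nat k)) t =
    (INR n + 1) * ((INR k + 1) * v n (Z.of_nat k + 1) t
                   - (1 + alpha n) * v n (Z.of_nat k) t
                   - (INR k + alpha n) * v n (Z.of_nat k - 1) t).
Proof.
  set (a := alpha n).
  set (f := fun i x => cc a k i * (E n x * Sf n x ^ i)).
  assert (Hv : forall x, sum_f_R0 (fun i => f i x) (S k) = v n (Z.of_nat k) x).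
  { intro x. rewrite v_nat. rewrite (lag_ext a k (S k)) by lia.
    rewrite <- sum_scal. apply sum_eq. intros i _. unfold f. ring. }
  assert (Hf : forall i, ex_derive (f i) t).
  { intro i. unfold f. apply ex_derive_scal. apply term_der. }
  destruct (der_sum f t (S k) Hf) as [Hs1 Hs2].
  split.
  - eapply ex_derive_ext; [exact Hv| exact Hs1].
  - rewrite <- (Derive_ext _ _ t Hv). rewrite Hs2.
    rewrite <- sum_scal.
    rewrite (sum_eq _ (fun i => (INR n + 1) * E n t * (cc a k i * (2 * INR i * Sf n t ^ i - Sf n t ^ (S i))))).
    2:{ intros i _. unfold f. rewrite Derive_scal.
        replace (t * (cc a k i * Derive (fun x => E n x * Sf n x ^ i) t))
          with (cc a k i * (t * Derive (fun x => E n x * Sf n x ^ i) t)) by ring.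
        rewrite (proj2 (term_der n i t)). ring. }
    rewrite sum_scal. rewrite poly_id.
    replace (Z.of_nat k + 1)%Z with (Z.of_nat (S k)) by lia.
    rewrite !v_nat. fold a.
    destruct k as [|k'].
    + rewrite (v_neg n (Z.of_nat 0 - 1)) by lia. simpl lagm. ring.
    + replace (Z.of_nat (S k') - 1)%Z with (Z.of_nat k') by lia.
      rewrite v_nat. fold a. unfold lagm. ring.
Qed.

Lemma core_Z n l t :
  ex_derive (v n l) t /\
  t * Derive (v n l) t =
    (INR n + 1) * ((IZR l + 1) * v n (l + 1) t
                   - (1 + alpha n) * v n l t
                   - (IZR l + alpha n) * v n (l - 1) t).
Proof.
  destruct (Z_lt_le_dec l 0) as [Hl|Hl].
  - assert (Hv : forall x, 0 = v n l x) by (intro x; rewrite v_neg; auto).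
    split.
    + eapply ex_derive_ext; [exact Hv|]. apply ex_derive_const.
    + rewrite <- (Derive_ext _ _ t Hv). rewrite Derive_const.
      rewrite (v_neg n l), (v_neg n (l - 1)) by lia.
      destruct (Z.eq_dec l (-1)) as [->|Hne].
      * simpl. ring.
      * rewrite (v_neg n (l + 1)) by lia. ring.
  - rewrite <- (Z2Nat.id l Hl). rewrite <- INR_IZR_INZ. apply core.
Qed.

Fixpoint dd (n k : nat) (i : nat) (j : Z) : R :=
  match i with
  | O => if (j =? 0)%Z then 1 else 0
  | S i' => (INR n + 1) * (IZR (Z.of_nat k + j) * dd n k i' (j - 1)
                            - (1 + alpha n) * dd n k i' j
                            - (IZR (Z.of_nat k + j) + 1 + alpha n) * dd n k i' (j + 1))
  end.

Lemma dd_supp n k i j : (Z.of_nat i < j \/ j < - Z.of_nat i)%Z -> dd n k i j = 0.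
Proof.
  revert j; induction i; intros j Hj.
  - simpl. destruct (Z.eqb_spec j 0); [lia|reflexivity].
  - cbn [dd]. rewrite !IHi by lia. ring.
Qed.

Lemma dd_lead n k i :
  dd n k i (Z.of_nat i) = (INR n + 1) ^ i * (INR (fact (k + i)) / INR (fact k)).
Proof.
  induction i.
  - simpl. rewrite Nat.add_0_r. field. apply fact_neq.
  - cbn [dd]. rewrite (dd_supp n k i (Z.of_nat (S i))) by lia.
    rewrite (dd_supp n k i (Z.of_nat (S i) + 1)) by lia.
    replace (Z.of_nat (S i) - 1)%Z with (Z.of_nat i) by lia.
    rewrite IHi.
    rewrite <- Nat2Z.inj_add, <- INR_IZR_INZ.
    replace (k + S i)%nat with (S (k + i)) by lia.
    rewrite fact_simpl, mult_INR. simpl pow. field. apply fact_neq.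
Qed.

Lemma abs_prod_le x y X Y : Rabs x <= X -> Rabs y <= Y -> Rabs (x * y) <= X * Y.
Proof.
  intros H1 H2. rewrite Rabs_mult. apply Rmult_le_compat; auto using Rabs_pos.
Qed.

Lemma alpha_abs n : Rabs (alpha n) <= 1.
Proof.
  unfold alpha. rewrite Rabs_Ropp. pose proof (pos_INR n).
  rewrite Rabs_pos_eq.
  - rewrite <- Rinv_1. apply Rinv_le_contravar; lra.
  - left. apply Rinv_0_lt_compat. lra.
Qed.

Lemma dd_bound n k i j :
  Rabs (dd n k i j) <= (6 * (INR n + 1)) ^ i * (INR (fact (k + i)) / INR (fact k)).
Proof.
  assert (Hf : forall m, 0 < INR (fact m)) by (intro m; apply lt_0_INR, lt_O_fact).
  pose proof (pos_INR n) as Hn.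
  revert j; induction i; intros j.
  - simpl. rewrite Nat.add_0_r. destruct (j =? 0)%Z.
    + rewrite Rabs_R1. right. field. apply fact_neq.
    + rewrite Rabs_R0. specialize (Hf k). apply Rmult_le_pos; [lra|]. 
      left. apply Rdiv_lt_0_compat; auto.
  - set (B := (6 * (INR n + 1)) ^ i * (INR (fact (k + i)) / INR (fact k))).
    assert (HB : 0 <= B).
    { unfold B. apply Rmult_le_pos. apply pow_le. lra.
      left. apply Rdiv_lt_0_compat; auto. }
    assert (Htarget : (6 * (INR n + 1)) ^ S i * (INR (fact (k + S i)) / INR (fact k))
                      = 6 * (INR n + 1) * (INR k + INR i + 1) * B).
    { unfold B. replace (k + S i)%nat with (S (k + i)) by lia.
      rewrite fact_simpl, mult_INR, S_INR, plus_INR. simpl pow. field. apply fact_neq. }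
    rewrite Htarget.
    destruct (Z_le_dec (Z.abs j) (Z.of_nat (S i))) as [Hj|Hj].
    + cbn [dd].
      set (x := IZR (Z.of_nat k + j)).
      assert (Hx : Rabs x <= INR k + INR i + 1).
      { apply Rabs_le. unfold x. rewrite !INR_IZR_INZ.
        rewrite <- !plus_IZR, <- opp_IZR. split; apply IZR_le; lia. }
      assert (Ha : Rabs (alpha n) <= 1) by apply alpha_abs.
      assert (H1 : Rabs (x * dd n k i (j - 1)) <= (INR k + INR i + 1) * B)
        by (apply abs_prod_le; auto).
      assert (H2 : Rabs ((1 + alpha n) * dd n k i j) <= 2 * B).
      { apply abs_prod_le; auto. eapply Rle_trans; [apply Rabs_triang|].
        rewrite Rabs_R1. lra. }
      assert (H3 : Rabs ((x + 1 + alpha n) * dd n k i (j + 1)) <= (INR k + INR i + 3) * B).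
      { apply abs_prod_le; auto. eapply Rle_trans; [apply Rabs_triang|].
        eapply Rle_trans; [apply Rplus_le_compat_r; apply Rabs_triang|].
        rewrite Rabs_R1. lra. }
      rewrite Rabs_mult. rewrite (Rabs_pos_eq (INR n + 1)) by lra.
      assert (Hs : Rabs (x * dd n k i (j - 1) - (1 + alpha n) * dd n k i j -
                         (x + 1 + alpha n) * dd n k i (j + 1))
                   <= (INR k + INR i + 1) * B + 2 * B + (INR k + INR i + 3) * B).
      { unfold Rminus. eapply Rle_trans; [apply Rabs_triang|].
        rewrite Rabs_Ropp. apply Rplus_le_compat; auto.
        eapply Rle_trans; [apply Rabs_triang|]. rewrite Rabs_Ropp.
        apply Rplus_le_compat; auto. }
      pose proof (pos_INR k); pose proof (pos_INR i).
      replace (6 * (INR n + 1) * (INR k + INR i + 1) * B)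
        with ((INR n + 1) * (6 * (INR k + INR i + 1) * B)) by ring.
      apply Rmult_le_compat_l; [lra|]. eapply Rle_trans; [exact Hs|]. nra.
    + rewrite dd_supp by lia. rewrite Rabs_R0.
      pose proof (pos_INR k); pose proof (pos_INR i).
      apply Rmult_le_pos; [|exact HB]. nra.
Qed.

Lemma euler_S i f t : euler_iter (S i) f t = t * Derive (euler_iter i f) t.
Proof. reflexivity. Qed.

Lemma expand n k i : forall t,
  euler_iter i (v n (Z.of_nat k)) t =
  sum_f_R0 (fun m => dd n k i (Z.of_nat m - Z.of_nat i)
                     * v n (Z.of_nat k + Z.of_nat m - Z.of_nat i) t) (2 * i).
Proof.
  set (a := alpha n).
  induction i; intro t.
  - simpl. rewrite Z.add_0_r, Z.sub_0_r. ring.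
  - rewrite euler_S. rewrite (Derive_ext _ _ t IHi).
    set (F := fun m x => dd n k i (Z.of_nat m - Z.of_nat i)
                         * v n (Z.of_nat k + Z.of_nat m - Z.of_nat i) x).
    assert (HF : forall m, ex_derive (F m) t).
    { intro m. unfold F. apply ex_derive_scal. apply core_Z. }
    destruct (der_sum F t (2 * i) HF) as [_ HD].
    change (fun x => sum_f_R0 (fun m => dd n k i (Z.of_nat m - Z.of_nat i) *
             v n (Z.of_nat k + Z.of_nat m - Z.of_nat i) x) (2 * i))
      with (fun x => sum_f_R0 (fun m => F m x) (2 * i)).
    rewrite HD. rewrite <- sum_scal.
    set (l := fun m : nat => (Z.of_nat k + Z.of_nat m - Z.of_nat i)%Z).
    rewrite (sum_eq _ (fun m => (INR n + 1) * (
        dd n k i (Z.of_nat m - Z.of_nat i) * (IZR (l m) + 1) * v n (l m + 1) t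
      - (1 + a) * (dd n k i (Z.of_nat m - Z.of_nat i) * v n (l m) t)
      - dd n k i (Z.of_nat m - Z.of_nat i) * (IZR (l m) + a) * v n (l m - 1) t))).
    2:{ intros m _. unfold F. rewrite Derive_scal.
        replace (t * (dd n k i (Z.of_nat m - Z.of_nat i) *
                 Derive (v n (Z.of_nat k + Z.of_nat m - Z.of_nat i)) t))
          with (dd n k i (Z.of_nat m - Z.of_nat i) *
                 (t * Derive (v n (Z.of_nat k + Z.of_nat m - Z.of_nat i)) t)) by ring.
        rewrite (proj2 (core_Z n _ t)). fold a. unfold l. ring. }
    rewrite sum_lin3.
    set (j := fun m : nat => (Z.of_nat m - Z.of_nat (S i))%Z).
    set (L := fun m : nat => (Z.of_nat k + Z.of_nat m - Z.of_nat (S i))%Z).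
    symmetry.
    transitivity (sum_f_R0 (fun m => (INR n + 1) * (
        IZR (Z.of_nat k + j m) * dd n k i (j m - 1) * v n (L m) t
      - (1 + a) * (dd n k i (j m) * v n (L m) t)
      - (IZR (Z.of_nat k + j m) + 1 + a) * dd n k i (j m + 1) * v n (L m) t)) (2 * S i)).
    { apply sum_eq; intros m _. unfold j, L. cbn [dd]. fold a. ring. }
    rewrite sum_lin3. symmetry.
    replace (2 * S i)%nat with (S (S (2 * i))) by lia.
    assert (Hz : forall z, (Z.of_nat i < z \/ z < - Z.of_nat i)%Z -> dd n k i z = 0)
      by (intros; apply dd_supp; auto).
    f_equal. f_equal. f_equal.
    -
      rewrite sum_S, sum_S.
      rewrite (Hz (j 0%nat - 1)%Z) by (unfold j; lia).
      rewrite (Hz (j 1%nat - 1)%Z) by (unfold j; lia).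
      rewrite !Rmult_0_r, !Rmult_0_l, !Rplus_0_l.
      apply sum_eq; intros m _. unfold j, L, l.
      replace (Z.of_nat (S (S m)) - Z.of_nat (S i) - 1)%Z with (Z.of_nat m - Z.of_nat i)%Z by lia.
      replace (Z.of_nat k + Z.of_nat (S (S m)) - Z.of_nat (S i))%Z
        with (Z.of_nat k + Z.of_nat m - Z.of_nat i + 1)%Z by lia.
      replace (IZR (Z.of_nat k + (Z.of_nat (S (S m)) - Z.of_nat (S i))))
        with (IZR (Z.of_nat k + Z.of_nat m - Z.of_nat i) + 1)
        by (rewrite <- plus_IZR; f_equal; lia).
      ring.
    -
      f_equal. rewrite sum_S.
      change (sum_f_R0 (fun m => dd n k i (j (S m)) * v n (L (S m)) t) (S (2 * i)))
        with (sum_f_R0 (fun m => dd n k i (j (S m)) * v n (L (S m)) t) (2 * i)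
              + dd n k i (j (S (S (2 * i)))) * v n (L (S (S (2 * i)))) t).
      rewrite (Hz (j 0%nat)) by (unfold j; lia).
      rewrite (Hz (j (S (S (2 * i))))) by (unfold j; lia).
      rewrite !Rmult_0_l, Rplus_0_l, Rplus_0_r.
      apply sum_eq; intros m _. unfold j, L, l.
      replace (Z.of_nat (S m) - Z.of_nat (S i))%Z with (Z.of_nat m - Z.of_nat i)%Z by lia.
      replace (Z.of_nat k + Z.of_nat (S m) - Z.of_nat (S i))%Z
        with (Z.of_nat k + Z.of_nat m - Z.of_nat i)%Z by lia.
      reflexivity.
    -
      change (sum_f_R0 (fun m => (IZR (Z.of_nat k + j m) + 1 + a) * dd n k i (j m + 1) * v n (L m) t)
                (S (S (2 * i))))
        with (sum_f_R0 (fun m => (IZR (Z.of_nat k + j m) + 1 + a) * dd n k i (j m + 1) * v n (L m) t)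
                (2 * i)
              + (IZR (Z.of_nat k + j (S (2 * i))) + 1 + a) * dd n k i (j (S (2 * i)) + 1) * v n (L (S (2 * i))) t
              + (IZR (Z.of_nat k + j (S (S (2 * i)))) + 1 + a) * dd n k i (j (S (S (2 * i))) + 1) * v n (L (S (S (2 * i)))) t).
      rewrite (Hz (j (S (2 * i)) + 1)%Z) by (unfold j; lia).
      rewrite (Hz (j (S (S (2 * i))) + 1)%Z) by (unfold j; lia).
      rewrite !Rmult_0_r, !Rmult_0_l, !Rplus_0_r.
      apply sum_eq; intros m _. unfold j, L, l.
      replace (Z.of_nat m - Z.of_nat (S i) + 1)%Z with (Z.of_nat m - Z.of_nat i)%Z by lia.
      replace (Z.of_nat k + Z.of_nat m - Z.of_nat (S i))%Z
        with (Z.of_nat k + Z.of_nat m - Z.of_nat i - 1)%Z by lia.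
      replace (IZR (Z.of_nat k + (Z.of_nat m - Z.of_nat (S i))) + 1)
        with (IZR (Z.of_nat k + Z.of_nat m - Z.of_nat i))
        by (rewrite <- plus_IZR; f_equal; lia).
      ring.
Qed.

Lemma sum_skip q : forall (g : nat -> R) N, (forall m, (m < q)%nat -> g m = 0) ->
  sum_f_R0 g (q + N) = sum_f_R0 (fun m => g (q + m)%nat) N.
Proof.
  induction q; intros g N Hg.
  - reflexivity.
  - change (S q + N)%nat with (S (q + N)). rewrite sum_S. rewrite Hg by lia.
    rewrite Rplus_0_l. rewrite (IHq (fun m => g (S m))).
    + reflexivity.
    + intros m Hm. apply Hg. lia.
Qed.

Theorem lemma5p1 (n : nat) :
  (* first-order identities *)
  (forall (k : nat) (t : R), (1 <= k)%nat ->
     ex_derive (v n (Z.of_nat k)) t /\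
     t * Derive (v n (Z.of_nat k)) t =
       (INR n + 1) * ((INR k + 1) * v n (Z.of_nat k + 1) t
                      - (1 + alpha n) * v n (Z.of_nat k) t
                      - (INR k + alpha n) * v n (Z.of_nat k - 1) t)) /\
  (forall t : R,
     ex_derive (v n 0) t /\
     t * Derive (v n 0) t = (INR n + 1) * (v n 1 t - (1 + alpha n) * v n 0 t)) /\
  (* higher-order expansion with coefficients delta^{k,i}_j, j = -i..i *)
  (exists C : R, 0 < C /\
     forall i k : nat, exists delta : Z -> R,
       (forall t : R,
          euler_iter i (v n (Z.of_nat k)) t =
            sum_n (fun m => delta (Z.of_nat m - Z.of_nat i)%Z
                            * v n (Z.of_nat k + Z.of_nat m - Z.of_nat i)%Z t) (2 * i)
          /\
          euler_iter i (v n (Z.of_nat k)) t =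
            sum_n (fun m => delta (Z.of_nat (Nat.max (k - i) 0 + m) - Z.of_nat k)%Z
                            * v n (Z.of_nat (Nat.max (k - i) 0 + m)) t)
                  (k + i - Nat.max (k - i) 0)) /\
       delta (Z.of_nat i) = (INR n + 1) ^ i * (INR (fact (k + i)) / INR (fact k)) /\
       (forall j : Z, (- Z.of_nat i <= j <= Z.of_nat i)%Z ->
          Rabs (delta j) <= C ^ i * (INR (fact (k + i)) / INR (fact k)))).
Proof.
  split; [|split].
  - intros k t _. apply core.
  - intro t. destruct (core n 0 t) as [H1 H2]. split; [exact H1|].
    change (Z.of_nat 0) with 0%Z in H2. rewrite H2.
    rewrite (v_neg n (0 - 1)) by lia. simpl INR. simpl (0 + 1)%Z. ring.
  - exists (6 * (INR n + 1)). split.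
    { pose proof (pos_INR n). lra. }
    intros i k. exists (dd n k i). split; [|split].
    + intro t. rewrite !sum_n_Reals. split.
      * apply expand.
      * rewrite expand. rewrite Nat.max_0_r.
        destruct (Nat.le_gt_cases i k) as [Hik|Hik].
        -- replace (k + i - (k - i))%nat with (2 * i)%nat by lia.
           apply sum_eq. intros m _.
           replace (Z.of_nat (k - i + m) - Z.of_nat k)%Z with (Z.of_nat m - Z.of_nat i)%Z by lia.
           replace (Z.of_nat (k - i + m)) with (Z.of_nat k + Z.of_nat m - Z.of_nat i)%Z by lia.
           reflexivity.
        -- replace (k - i)%nat with 0%nat by lia.
           replace (2 * i)%nat with ((i - k) + (k + i - 0))%nat by lia.
           rewrite sum_skip.
           ++ apply sum_eq. intros m _.
              replace (Z.of_nat (i - k + m) - Z.of_nat i)%Z with (Z.of_nat (0 + m) - Z.of_nat k)%Z by lia.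
              replace (Z.of_nat k + Z.of_nat (i - k + m) - Z.of_nat i)%Z with (Z.of_nat (0 + m)) by lia.
              reflexivity.
           ++ intros m Hm. rewrite v_neg by lia. ring.
    + apply dd_lead.
    + intros j _. apply dd_bound.
Qed.
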